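(* Let $(K,\mathrm{val})$ be a $2$-henselian valued field whose residue class field $F$ is a euclidean field, and assume $(K,\mathrm{val})$ admits an angular component map $\mathrm{an}:K^\times\to F^\times$. Then: (1) $K$ is pythagorean, i.e. every sum of squares in $K$ is a square; (2) $\operatorname{PO}_K(1)=K^2$ and $\operatorname{PO}_K(-1)=K$; (3) for every $f\in K\setminus\{0\}$, $\operatorname{PO}_K(f)\in\{K^2,K\}$ if and only if $\mathrm{val}(f)\in G^2$; in particular, there exists $f\in K$ with $\operatorname{PO}_K(f)\ne K^2$ and $\operatorname{PO}_K(f)\ne K$ if and only if $G\ne G^2$; (4) every monogenic quadratic module $\operatorname{PO}_K(f)$ satisfies $K^2\subseteq\operatorname{PO}_K(f)\subseteq K$, and if $f_1,f_2\in K$ are such that $\operatorname{PO}_K(f_i)\notin\{K,K^2\}$ for $i=1,2$ and $\operatorname{PO}_K(f_1)\subseteq\operatorname{PO}_K(f_2)$, then $\operatorname{PO}_K(f_1)=\operatorname{PO}_K(f_2)$.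
   Context: Let $(G,\le)$ be a totally ordered abelian group written multiplicatively with identity $e$, and $G^2=\{g^2:g\in G\}$. Let $(K,\mathrm{val})$ be a valued field with surjective valuation $\mathrm{val}:K\to G\cup\{\infty\}$, valuation ring $B=\{x:\mathrm{val}(x)\ge e\}$, residue map $\pi:B\to F$, residue field $F$. A euclidean field is a formally real field $F$ with $F=F^2\cup(-F^2)$ (in particular $\mathrm{char}F=0$); $2$-henselian is then equivalent to every $x\in B^\times$ with $\pi(x)=1$ being a square in $K$. For $g\in G$, $\overline g$ denotes its class in $G/G^2$. An angular component map is a group homomorphism $\mathrm{an}:K^\times\to F^\times$ satisfying: (1) $\mathrm{an}(u)=\pi(u)$ for $u\in B^\times$; (2) $\mathrm{an}(ux)=\pi(u)\mathrm{an}(x)$; (3) for all $g\in G$, $c\in F^\times$ there is $w\in K$ with $\mathrm{val}(w)=g$, $\mathrm{an}(w)=c$; (4) for nonzero $x_1,x_2$ with $x_1+x_2\ne0$: if $\mathrm{val}(x_1)<\mathrm{val}(x_2)$ then $\mathrm{an}(x_1+x_2)=\mathrm{an}(x_1)$; if $\mathrm{val}(x_1)=\mathrm{val}(x_2)$ and $\mathrm{an}(x_1)+\mathrm{an}(x_2)\ne0$ then $\mathrm{val}(x_1+x_2)=\mathrm{val}(x_1)$ and $\mathrm{an}(x_1+x_2)=\mathrm{an}(x_1)+\mathrm{an}(x_2)$; (5) if $\overline{\mathrm{val}(x)}=\overline{\mathrm{val}(y)}$ and $\mathrm{an}(x)=\mathrm{an}(y)$ then $y=u^2x$ for some $u\in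 K^\times$; (6) for $a,u\in K^\times$, $\mathrm{an}(au^2)=\mathrm{an}(a)k^2$ for some $k\in F^\times$. For $f\in K$, $\operatorname{PO}_K(f)=\{\sigma_0+\sigma_1f:\ \sigma_0,\sigma_1\text{ finite sums of squares in }K\}$ is the monogenic quadratic module generated by $f$; $K^2=\{x^2:x\in K\}$. *)

(* Defs.v *)
From mathcomp Require Import all_boot all_order all_algebra.
Set Implicit Arguments. Unset Strict Implicit. Unset Printing Implicit Defensive.
Import Order.TTheory GRing.Theory Num.Theory.
Local Open Scope ring_scope.

(* The value group G is written ADDITIVELY: identity 0, product + ; the
   paper's G^2 = {g^2} becomes {g + g}. *)
Definition ordered_abelian_group (G : zmodType) (le : rel G) : Prop :=
  [/\ (forall a, le a a),
      (forall a b, le a b -> le b a -> a = b),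
      (forall a b c, le a b -> le b c -> le a c),
      (forall a b, le a b \/ le b a)
    & (forall a b c, le a b -> le (a + c) (b + c))].

Definition in_G2 (G : zmodType) (g : G) : Prop := exists h : G, g = h + h.

(* G union {oo}, with oo = None *)
Definition ole (G : zmodType) (le : rel G) (a b : option G) : Prop :=
  match a, b with
  | _, None => True
  | None, Some _ => False
  | Some x, Some y => le x y
  end.

Definition oadd (G : zmodType) (a b : option G) : option G :=
  match a, b with
  | Some x, Some y => Some (x + y)
  | _, _ => None
  end.

Definition surj_valuation (K : fieldType) (G : zmodType) (le : rel G)
    (v : K -> option G) : Prop :=
  [/\ (forall x, v x = None <-> x = 0),
      (forall x y, v (x * y) = oadd (v x) (v y)),
      (forall x y, ole le (v x) (v (x + y)) \/ ole le (v y) (v (x + y)))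
    & (forall g : G, exists x, v x = Some g)].

Definition in_valring (K : fieldType) (G : zmodType) (le : rel G)
    (v : K -> option G) (x : K) : Prop := ole le (Some 0) (v x).

(* pi : B -> F is the residue map onto the residue field F = B / m:
   a surjective ring homomorphism on B whose kernel is the maximal ideal
   m = {x | val x > e}.  (pi is given as a total function; only its values
   on B matter.) *)
Definition residue_map (K : fieldType) (G : zmodType) (le : rel G)
    (v : K -> option G) (F : fieldType) (pi : K -> F) : Prop :=
  [/\ (forall x y, in_valring le v x -> in_valring le v y ->
         pi (x + y) = pi x + pi y),
      (forall x y, in_valring le v x -> in_valring le v y ->
         pi (x * y) = pi x * pi y),
      pi 1 = 1,
      (forall c : F, exists x, in_valring le v x /\ pi x = c)
    & (forall x, in_valring le v x ->
         (pi x = 0 <-> (ole le (Some 0) (v x) /\ v x <> Some 0)))].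

Definition is_square (R : pzRingType) (x : R) : Prop := exists y : R, x = y ^+ 2.

Definition sum_of_squares (R : pzRingType) (x : R) : Prop :=
  exists s : seq R, x = \sum_(a <- s) a ^+ 2.

Definition formally_real (F : fieldType) : Prop := ~ sum_of_squares (-1 : F).

Definition euclidean_field (F : fieldType) : Prop :=
  formally_real F /\ (forall x : F, is_square x \/ is_square (- x)).

Definition pythagorean (K : fieldType) : Prop :=
  forall x : K, sum_of_squares x -> is_square x.

(* 2-henselian, in the form valid when the residue field is euclidean
   (as stated in the paper's context): every 1-unit is a square. *)
Definition two_henselian (K : fieldType) (G : zmodType) (v : K -> option G)
    (F : fieldType) (pi : K -> F) : Prop :=
  forall x : K, v x = Some 0 -> pi x = 1 -> is_square x.

Definition angular_component (K : fieldType) (G : zmodType) (le : rel G)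
    (v : K -> option G) (F : fieldType) (pi : K -> F) (an : K -> F) : Prop :=
      (forall x, x != 0 -> an x != 0)
      /\ (forall x y, x != 0 -> y != 0 -> an (x * y) = an x * an y) /\
      (forall u, v u = Some 0 -> an u = pi u) /\
      (forall u x, v u = Some 0 -> x != 0 -> an (u * x) = pi u * an x) /\
      (forall (g : G) (c : F), c != 0 -> exists w, v w = Some g /\ an w = c) /\
      (forall (x1 x2 : K) (g1 g2 : G), x1 != 0 -> x2 != 0 -> x1 + x2 != 0 ->
         v x1 = Some g1 -> v x2 = Some g2 ->
         ((le g1 g2 /\ g1 <> g2) -> an (x1 + x2) = an x1) /\
         (g1 = g2 -> an x1 + an x2 != 0 ->
            v (x1 + x2) = v x1 /\ an (x1 + x2) = an x1 + an x2)) /\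
      (forall (x y : K) (gx gy : G), x != 0 -> y != 0 ->
         v x = Some gx -> v y = Some gy -> in_G2 (gx - gy) -> an x = an y ->
         exists u, u != 0 /\ y = u ^+ 2 * x) /\
      (forall a u : K, a != 0 -> u != 0 ->
         exists k : F, k != 0 /\ an (a * u ^+ 2) = an a * k ^+ 2).

Definition PO (K : fieldType) (f : K) : K -> Prop :=
  fun x => exists s0 s1 : K, [/\ sum_of_squares s0, sum_of_squares s1
                               & x = s0 + s1 * f].

Definition same_set (T : Type) (A B : T -> Prop) : Prop := forall x, A x <-> B x.
Definition incl (T : Type) (A B : T -> Prop) : Prop := forall x, A x -> B x.
Definition setT_ (T : Type) : T -> Prop := fun _ => True.
Definition squares (K : fieldType) : K -> Prop := fun x => is_square x.

(* Main.v *)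
Require Import Defs.
From mathcomp Require Import all_boot all_order all_algebra ring.
From Stdlib Require Import Classical.
Import GRing.Theory.
Local Open Scope ring_scope.

Theorem mainTheorem17
  (K : fieldType) (G : zmodType) (le : rel G) (v : K -> option G)
  (F : fieldType) (pi : K -> F)
  (hG : ordered_abelian_group le)
  (hv : surj_valuation le v)
  (hpi : residue_map le v pi)
  (hF : euclidean_field F)
  (h2 : two_henselian v pi)
  (han : exists an : K -> F, angular_component le v pi an) :
  (* (1) *)
  pythagorean K /\
  (* (2) *)
  (same_set (PO 1) (@squares K) /\ same_set (PO (-1)) (@setT_ K)) /\
  (* (3) *)
  ((forall f : K, f != 0 ->
      ((same_set (PO f) (@squares K) \/ same_set (PO f) (@setT_ K)) <->
       (exists g, v f = Some g /\ in_G2 g))) /\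
   ((exists f : K, ~ same_set (PO f) (@squares K) /\ ~ same_set (PO f) (@setT_ K))
      <-> (exists g : G, ~ in_G2 g))) /\
  (* (4) *)
  ((forall f : K, incl (@squares K) (PO f) /\ incl (PO f) (@setT_ K)) /\
   (forall f1 f2 : K,
      ~ same_set (PO f1) (@squares K) -> ~ same_set (PO f1) (@setT_ K) ->
      ~ same_set (PO f2) (@squares K) -> ~ same_set (PO f2) (@setT_ K) ->
      incl (PO f1) (PO f2) -> same_set (PO f1) (PO f2))).
Proof.
case: hG => lrefl lanti ltrans ltot ladd.
case: hv => vN vM vU vS.
case: hpi => piD piM pi1 piS piK.
case: hF => Freal Feuc.
clear han.
have v0 : v 0 = None by apply/vN.
have vnz : forall x, x != 0 -> exists g, v x = Some g.
  move=> x /eqP nx; case E: (v x) => [g|]; first by exists g.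
  by move/vN: E.
have vnz' : forall x g, v x = Some g -> x != 0.
  by move=> x g E; apply/eqP => x0; move: E; rewrite x0 v0.
have tors : forall h : G, h + h = 0 -> h = 0.
  move=> h hh; case: (ltot 0 h) => H.
  - apply: lanti; last exact H. by have := ladd _ _ h H; rewrite add0r hh.
  - apply: lanti; first exact H. by have := ladd _ _ h H; rewrite add0r hh.
have v1 : v 1 = Some 0.
  have [g E] := vnz 1 (oner_neq0 _).
  have := vM 1 1; rewrite mulr1 E /= => -[gg].
  congr Some; apply: (@addrI _ g); by rewrite addr0 -gg.
have vinv : forall x g, v x = Some g -> v x^-1 = Some (- g).
  move=> x g E; have nx := vnz' _ _ E.
  have [h Eh] := vnz x^-1 (invr_neq0 nx).
  have := vM x x^-1; rewrite mulfV // v1 E Eh /= => -[hg].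
  congr Some; apply: (@addrI _ g); by rewrite subrr -hg.
have vm1 : v (-1) = Some 0.
  have nm1 : (-1 : K) != 0 by rewrite oppr_eq0 oner_neq0.
  have [h E] := vnz (-1) nm1.
  have := vM (-1) (-1); rewrite mulrNN mulr1 v1 E /= => -[hh].
  by rewrite (tors h).
have vopp : forall x, v (- x) = v x.
  move=> x; rewrite -mulN1r vM vm1; case: (v x) => //= g; by rewrite add0r.
have vmulS : forall x y g h, v x = Some g -> v y = Some h -> v (x * y) = Some (g + h).
  by move=> x y g h E1 E2; rewrite vM E1 E2.
have vsq : forall x g, v x = Some g -> v (x ^+ 2) = Some (g + g).
  by move=> x g E; rewrite expr2 (vmulS _ _ _ _ E E).
have vdiv : forall x y g h, v x = Some g -> v y = Some h -> v (x / y) = Some (g - h).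
  by move=> x y g h E1 E2; rewrite (vmulS _ _ _ _ E1 (vinv _ _ E2)).
have oleT : forall a b c, ole le a b -> ole le b c -> ole le a c.
  by move=> [a|] [b|] [c|] //=; exact: ltrans.
have Badd : forall x y, in_valring le v x -> in_valring le v y -> in_valring le v (x + y).
  by move=> x y Hx Hy; case: (vU x y) => H; [exact: oleT Hx H | exact: oleT Hy H].
have Bmul : forall x y, in_valring le v x -> in_valring le v y -> in_valring le v (x * y).
  rewrite /in_valring => x y; rewrite vM; case: (v x) (v y) => [g|] [h|] //= Hg Hh.
  have := ladd _ _ h Hg; rewrite add0r => H; exact: ltrans Hh H.
have strict : forall x y g h, v x = Some g -> v y = Some h -> le g h -> g <> h ->
    v (x + y) = Some g.
  move=> x y g h Ex Ey lgh ngh.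
  case Es: (v (x + y)) => [k|]; last first.
    move/vN: Es => /eqP; rewrite addr_eq0 => /eqP yx.
    by move: Ex; rewrite yx vopp Ey => -[/esym].
  have lgk : le g k.
    case: (vU x y); rewrite ?Ex ?Ey Es /= => // H; exact: ltrans lgh H.
  have lkg : le k g.
    case: (vU (x + y) (- y)); rewrite addrK ?vopp ?Es ?Ex ?Ey /= => // H.
    by case: ngh; apply: lanti.
  by rewrite (lanti _ _ lkg lgk).
have inB0 : in_valring le v 0 by rewrite /in_valring v0.
have inBu : forall x, v x = Some 0 -> in_valring le v x.
  by move=> x E; rewrite /in_valring E /=.
have pi0 : pi 0 = 0.
  have := piD 0 0 inB0 inB0; rewrite addr0 => H.
  apply: (@addrI _ (pi 0)); by rewrite addr0 -H.
have pim1 : pi (-1) = -1.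
  have := piD 1 (-1) (inBu _ v1) (inBu _ vm1); rewrite subrr pi0 pi1.
  move/esym/eqP; rewrite addr_eq0 => /eqP H; by rewrite H opprK.
have unit_pi : forall x, v x = Some 0 -> pi x != 0.
  move=> x E; apply/eqP => H0; have := proj1 (piK x (inBu x E)) H0.
  by rewrite E; case.
have pi_unit : forall x, in_valring le v x -> pi x != 0 -> v x = Some 0.
  move=> x Bx nz; case: (eqVneq (v x) (Some 0)) => // ne.
  case/eqP: nz; apply: (proj2 (piK x Bx)); split; [exact: Bx | exact/eqP].
have lift : forall d : F, d != 0 -> exists d', v d' = Some 0 /\ pi d' = d.
  move=> d nd; have [x [Bx px]] := piS d; exists x; split => //.
  by apply: pi_unit => //; rewrite px.
have piinv : forall u, v u = Some 0 -> v u^-1 = Some 0 /\ pi u^-1 = (pi u)^-1.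
  move=> u E; have Ei := vinv _ _ E; rewrite oppr0 in Ei; split => //.
  have := piM u u^-1 (inBu _ E) (inBu _ Ei).
  rewrite mulfV ?(vnz' _ _ E) // pi1 => H.
  by rewrite -{1}(mulKf (unit_pi _ E) (pi u^-1)) -H mulr1.
have Sq1 : forall y (d : F), v y = Some 0 -> d != 0 -> pi y = d ^+ 2 -> is_square y.
  move=> y d Ey nd pd.
  have [d' [Ed pd']] := lift d nd.
  have [Ei pii] := piinv d' Ed.
  have Eu : v (y * (d'^-1) ^+ 2) = Some 0.
    by rewrite (vmulS _ _ _ _ Ey (vsq _ _ Ei)) !addr0.
  have pu : pi (y * (d'^-1) ^+ 2) = 1.
    have Bi := inBu _ Ei.
    have By := inBu _ Ey.
    have Bi2 : in_valring le v ((d'^-1) ^+ 2) by rewrite expr2; apply: Bmul.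
    rewrite (piM _ _ By Bi2) expr2 (piM _ _ Bi Bi) pii pd' pd.
    by rewrite -expr2 -exprMn mulfV // expr1n.
  have [e He] := h2 _ Eu pu.
  exists (e * d'); rewrite exprMn -He -mulrA -exprMn mulVf ?expr1n ?mulr1 //.
  exact: vnz' _ _ Ed.
have sq0 : (0 : K) ^+ 2 = 0 by rewrite expr2 mul0r.
have sq2 : forall a b : K, is_square (a ^+ 2 + b ^+ 2).
  have key : forall a b g h, v a = Some g -> v b = Some h -> le g h ->
      is_square (a ^+ 2 + b ^+ 2).
    move=> a b g h Ea Eb lgh.
    have na := vnz' _ _ Ea.
    have Et := vdiv _ _ _ _ Eb Ea.
    have H0 : le 0 (h - g) by have := ladd _ _ (- g) lgh; rewrite subrr.
    have Bt : in_valring le v (b / a) by rewrite /in_valring Et.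
    have Bt2 : in_valring le v ((b / a) ^+ 2) by rewrite expr2; exact: Bmul.
    have B1t := Badd _ _ (inBu _ v1) Bt2.
    have pE : pi (1 + (b / a) ^+ 2) = 1 + (pi (b / a)) ^+ 2.
      by rewrite (piD _ _ (inBu _ v1) Bt2) pi1 expr2 (piM _ _ Bt Bt).
    set p := pi (b / a) in pE.
    have nz : 1 + p ^+ 2 != 0.
      apply/eqP => H; apply: Freal; exists [:: p]; rewrite big_seq1.
      move/eqP: H; rewrite addr_eq0 => /eqP ->; by rewrite opprK.
    case: (Feuc (1 + p ^+ 2)) => [[d Hd]|[d Hd]]; last first.
      exfalso; apply: Freal; exists [:: p; d]; rewrite big_cons big_seq1 -Hd.
      ring.
    have nd : d != 0 by apply: contraNneq nz => d0; rewrite Hd d0 expr2 mul0r.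
    have pnz : pi (1 + (b / a) ^+ 2) != 0 by rewrite pE.
    have Ev := pi_unit _ B1t pnz.
    have [e He] := Sq1 _ d Ev nd (etrans pE Hd).
    exists (a * e); rewrite exprMn -He.
    by rewrite mulrDr mulr1 -exprMn mulrCA mulfV // mulr1.
  move=> a b.
  case: (eqVneq a 0) => [->|na]; first by exists b; rewrite sq0 add0r.
  case: (eqVneq b 0) => [->|nb]; first by exists a; rewrite sq0 addr0.
  have [g Ea] := vnz a na; have [h Eb] := vnz b nb.
  case: (ltot g h) => H; first exact: key Ea Eb H.
  rewrite addrC; exact: key Eb Ea H.
have pyth : pythagorean K.
  move=> x [s ->]; elim: s => [|c s [y Hy]].
    by rewrite big_nil; exists 0; rewrite sq0.
  rewrite big_cons Hy; exact: sq2.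
have sos_sq : forall x : K, is_square x -> sum_of_squares x.
  by move=> x [y ->]; exists [:: y]; rewrite big_seq1.
have POab : forall (f x : K), PO f x <-> exists a b, x = a ^+ 2 + b ^+ 2 * f.
  move=> f x; split.
    move=> [s0 [s1 [H0 H1 ->]]].
    have [a ->] := pyth _ H0; have [b ->] := pyth _ H1; by exists a, b.
  move=> [a [b ->]]; exists (a ^+ 2), (b ^+ 2); split => //; apply: sos_sq.
    by exists a. by exists b.
have two0 : (1 + 1 : K) != 0.
  apply/eqP => H.
  have : pi (1 + 1) = 1 + 1 by rewrite (piD _ _ (inBu _ v1) (inBu _ v1)) pi1.
  rewrite H pi0 => /esym/eqP; rewrite addr_eq0 => /eqP H2.
  apply: Freal; exists [:: 1]; by rewrite big_seq1 expr1n -H2.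
have vsqG2 : forall c g, v (c ^+ 2) = Some g -> in_G2 g.
  move=> c g E; have nc : c != 0.
    by apply/eqP => c0; move: E; rewrite c0 sq0 v0.
  have [h Eh] := vnz c nc; move: E; rewrite (vsq _ _ Eh) => -[<-]; by exists h.
have notsq : forall (f : K) g, v f = Some g -> ~ in_G2 g -> ~ is_square f.
  by move=> f g E ng [c Hc]; rewrite Hc in E; exact: ng (vsqG2 _ _ E).
have oneunit : forall z k, v z = Some k -> le 0 k -> k <> 0 ->
    v (1 + z) = Some 0 /\ pi (1 + z) = 1.
  move=> z k E lk nk; split.
    by apply: (strict _ _ _ _ v1 E lk) => e; apply: nk.
  have Bz : in_valring le v z by rewrite /in_valring E.
  rewrite (piD _ _ (inBu _ v1) Bz) pi1.
  have -> : pi z = 0.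
    apply: (proj2 (piK z Bz)); split => //; rewrite E => -[]; exact: nk.
  by rewrite addr0.
have decomp : forall (f : K) g (a b : K), v f = Some g -> ~ in_G2 g -> a != 0 -> b != 0 ->
    exists w, [/\ v w = Some 0, pi w = 1 &
      (a ^+ 2 + b ^+ 2 * f = a ^+ 2 * w \/ a ^+ 2 + b ^+ 2 * f = b ^+ 2 * f * w)].
  move=> f g a b Ef ng na nb.
  have [ga Ea] := vnz a na; have [gb Eb] := vnz b nb.
  have E1 := vsq _ _ Ea.
  have E2 := vmulS _ _ _ _ (vsq _ _ Eb) Ef.
  have na2 : a ^+ 2 != 0 by apply: expf_neq0.
  have nbf : b ^+ 2 * f != 0 by apply: (vnz' _ _ E2).
  have neq : ga + ga <> gb + gb + g.
    move=> H; apply: ng; exists (ga - gb).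
    have -> : (ga - gb) + (ga - gb) = (ga + ga) - (gb + gb) by rewrite opprD addrACA.
    by rewrite H addrAC subrr add0r.
  case: (ltot (ga + ga) (gb + gb + g)) => H.
    have Ez := vdiv _ _ _ _ E2 E1.
    have lk : le 0 (gb + gb + g - (ga + ga)).
      by have := ladd _ _ (- (ga + ga)) H; rewrite subrr.
    have [Ew pw] := oneunit _ _ Ez lk (fun e => neq (esym (subr0_eq e))).
    exists (1 + b ^+ 2 * f / a ^+ 2); split => //; left.
    by rewrite mulrDr mulr1 mulrCA mulfV // mulr1.
  have Ez := vdiv _ _ _ _ E1 E2.
  have lk : le 0 (ga + ga - (gb + gb + g)).
    by have := ladd _ _ (- (gb + gb + g)) H; rewrite subrr.
  have [Ew pw] := oneunit _ _ Ez lk (fun e => neq (subr0_eq e)).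
  exists (1 + a ^+ 2 / (b ^+ 2 * f)); split => //; right.
  by rewrite mulrDr mulr1 mulrCA mulfV // mulr1 addrC.
have notPOm1 : forall (f : K) g, v f = Some g -> ~ in_G2 g -> ~ PO f (-1).
  move=> f g Ef ng /POab [a [b H]].
  have nsqF : forall c : K, v c = Some 0 -> pi (-1) = (pi c) ^+ 2 -> False.
    move=> c Ec; rewrite pim1 => H'; apply: Freal; exists [:: pi c]; by rewrite big_seq1.
  have g2c : forall gb, gb + gb + g = 0 -> False.
    move=> gb e; apply: ng; exists (- gb).
    move/eqP: e; rewrite addrC addr_eq0 => /eqP ->; by rewrite opprD.
  case: (eqVneq b 0) => [b0|nb].
    rewrite b0 sq0 mul0r addr0 in H.
    have na : a != 0 by apply/eqP => a0; move: H; rewrite a0 sq0 => /eqP; rewrite oppr_eq0 oner_eq0.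
    have [ga Ea] := vnz a na.
    have := vsq _ _ Ea; rewrite -H vm1 => -[/esym/tors ga0]; rewrite ga0 in Ea.
    apply: (nsqF a Ea); by rewrite H expr2 (piM _ _ (inBu _ Ea) (inBu _ Ea)) expr2.
  have [gb Eb] := vnz b nb.
  case: (eqVneq a 0) => [a0|na].
    rewrite a0 sq0 add0r in H.
    have := vmulS _ _ _ _ (vsq _ _ Eb) Ef; rewrite -H vm1 => -[/esym]; exact: g2c.
  have [w [Ew pw [Hw|Hw]]] := decomp f g a b Ef ng na nb.
    have [ga Ea] := vnz a na.
    have := vmulS _ _ _ _ (vsq _ _ Ea) Ew; rewrite -Hw -H vm1 addr0 => -[/esym/tors ga0].
    rewrite ga0 in Ea.
    have Ba := inBu _ Ea.
    have Ba2 : in_valring le v (a ^+ 2) by rewrite expr2; apply: Bmul.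
    apply: (nsqF a Ea); rewrite H Hw (piM _ _ Ba2 (inBu _ Ew)) pw mulr1.
    by rewrite expr2 (piM _ _ Ba Ba) expr2.
  have := vmulS _ _ _ _ (vmulS _ _ _ _ (vsq _ _ Eb) Ef) Ew.
  rewrite -Hw -H vm1 addr0 => -[/esym]; exact: g2c.
have PO0 : same_set (PO 0) (@squares K).
  move=> x; split.
    by move/POab=> [a [b ->]]; rewrite mulr0 addr0; exists a.
  by move=> [y ->]; apply/POab; exists y, 0; rewrite sq0 mul0r addr0.
have sqPO : forall (f x : K), is_square x -> PO f x.
  by move=> f x [y ->]; apply/POab; exists y, 0; rewrite sq0 mul0r addr0.
have fPO : forall f : K, PO f f.
  by move=> f; apply/POab; exists 0, 1; rewrite sq0 expr1n mul1r add0r.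
have thm3a : forall f : K, f != 0 ->
    ((same_set (PO f) (@squares K) \/ same_set (PO f) (@setT_ K)) <->
     (exists g, v f = Some g /\ in_G2 g)).
  move=> f nf; have [g Ef] := vnz f nf; split.
    move=> HP; exists g; split => //; apply: NNPP => ng.
    case: HP => HP.
      exact: (notsq _ _ Ef ng) (proj1 (HP f) (fPO f)).
    exact: (notPOm1 _ _ Ef ng) (proj2 (HP (-1)) I).
  move=> [g' [Ef' [h Hh]]].
  have gE : g = h + h by move: Ef'; rewrite Ef Hh => -[].
  have [w Ew] := vS h; have nw := vnz' _ _ Ew.
  have Eu : v (f / w ^+ 2) = Some 0.
    by rewrite (vdiv _ _ _ _ Ef (vsq _ _ Ew)) gE subrr.
  have nu := vnz' _ _ Eu.
  have pu := unit_pi _ Eu.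
  case: (Feuc (pi (f / w ^+ 2))) => [[d Hd]|[d Hd]].
    left.
    have nd : d != 0 by apply: contraNneq pu => d0; rewrite Hd d0 expr2 mul0r.
    have [e He] := Sq1 _ d Eu nd Hd.
    have fE : f = (e * w) ^+ 2 by rewrite exprMn -He mulfVK ?expf_neq0.
    move=> x; split; last exact: sqPO.
    by move/POab=> [a [b ->]]; rewrite fE -exprMn; exact: sq2.
  right.
  have Enu : v (- (f / w ^+ 2)) = Some 0 by rewrite vopp.
  have pnu : pi (- (f / w ^+ 2)) = d ^+ 2.
    by rewrite -mulN1r (piM _ _ (inBu _ vm1) (inBu _ Eu)) pim1 mulN1r.
  have nd : d != 0 by apply: contraNneq pu => d0; rewrite -oppr_eq0 Hd d0 expr2 mul0r.
  have [e He] := Sq1 _ d Enu nd pnu.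
  have ne : e != 0.
    apply/eqP => e0; move: He; rewrite e0 sq0 => /eqP; rewrite oppr_eq0; exact/negP.
  have fE : f = - (e * w) ^+ 2 by rewrite exprMn -He mulNr mulfVK ?expf_neq0 // opprK.
  move=> x; split => // _; apply/POab.
  exists ((x + 1) / (1 + 1)), ((x - 1) / (1 + 1) / (e * w)).
  rewrite fE; field.
  by rewrite nw ne /=; move: two0; rewrite -mulr2n.
have thm3b : (exists f : K, ~ same_set (PO f) (@squares K) /\ ~ same_set (PO f) (@setT_ K))
      <-> (exists g : G, ~ in_G2 g).
  split.
    move=> [f [n1 n2]].
    have nf : f != 0 by apply/eqP => f0; apply: n1; rewrite f0.
    have [g Ef] := vnz f nf; exists g => hg.
    by case: (proj2 (thm3a f nf) (ex_intro _ g (conj Ef hg))).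
  move=> [g ng]; have [f Ef] := vS g; have nf := vnz' _ _ Ef.
  exists f; have H := thm3a f nf; split => Hs.
    move: (proj1 H (or_introl Hs)) => [g' [Ef' hg']]; rewrite Ef in Ef'.
    by case: Ef' hg' => <-.
  move: (proj1 H (or_intror Hs)) => [g' [Ef' hg']]; rewrite Ef in Ef'.
  by case: Ef' hg' => <-.
have nG2 : forall f : K, ~ same_set (PO f) (@squares K) -> ~ same_set (PO f) (@setT_ K) ->
    f != 0 /\ exists g, v f = Some g /\ ~ in_G2 g.
  move=> f n1 n2.
  have nf : f != 0 by apply/eqP => f0; apply: n1; rewrite f0.
  have [g Ef] := vnz f nf; split => //; exists g; split => // hg.
  by case: (proj2 (thm3a f nf) (ex_intro _ g (conj Ef hg))).
split; first exact: pyth.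
split.
  split.
    move=> x; split.
      by move/POab=> [a [b ->]]; rewrite mulr1; exact: sq2.
    exact: sqPO.
  move=> x; split => // _; apply/POab.
  exists ((x + 1) / (1 + 1)), ((x - 1) / (1 + 1)); field.
  exact: two0.
split; first by split.
split; first by move=> f; split => //; exact: sqPO.
move=> f1 f2 n11 n12 n21 n22 inc.
have [nf1 [g1 [E1 ng1]]] := nG2 f1 n11 n12.
have [nf2 [g2 [E2 ng2]]] := nG2 f2 n21 n22.
have [c [nc Hc]] : exists c, c != 0 /\ f1 = c ^+ 2 * f2.
  have := inc f1 (fPO f1); move/POab=> [a [b H]].
  case: (eqVneq b 0) => [b0|nb].
    rewrite b0 sq0 mul0r addr0 in H.
    by exfalso; apply: (notsq _ _ E1 ng1); exists a.
  case: (eqVneq a 0) => [a0|na].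
    by exists b; split => //; rewrite H a0 sq0 add0r.
  have [w [Ew pw [Hw|Hw]]] := decomp f2 g2 a b E2 ng2 na nb.
    have [e He] := h2 w Ew pw.
    by exfalso; apply: (notsq _ _ E1 ng1); exists (a * e); rewrite H Hw He exprMn.
  have [e He] := h2 w Ew pw.
  have ne : e != 0.
    by apply/eqP => e0; move: (vnz' _ _ Ew); rewrite He e0 sq0 eqxx.
  exists (b * e); split; first exact: mulf_neq0.
  by rewrite H Hw He exprMn mulrAC.
move=> x; split; first exact: inc.
move/POab=> [a [b ->]]; apply/POab; exists a, (b / c).
by rewrite Hc mulrA -exprMn mulfVK.
Qed.
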